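(* Any averaging system (with weight threshold $\rho$) in which every $G_t$ has at most $m$ connected components can be interpreted as an $m$-twist system with the same $s$-energy. Specifically, at each time the blocks of the twist system are the index intervals of the agents spanned by the blocks of the embedded $G_t$, and the $s$-energy of the twist system equals that of the averaging system for all $s\in(0,1]$.
   Context: Averaging system: - $(G_t)_{t\ge0}$ are undirected graphs on $[n]$, each with self-loops at all vertices. - $P_t$ is row-stochastic with $(P_t)_{ij}>0$ iff $\{i,j\}$ is an edge of $G_t$, and all nonzero entries are $\ge\rho\in(0,1/2]$. - The dynamics is $x(t+1)=P_tx(t)$. - The blocks at time $t$ are the maximal intervals of the union of the closed intervals with endpoints $x_i(t),x_j(t)$ over edges $\{i,j\}$, $i\ne j$, of $G_t$. - The $s$-energy is $\sum_t\sum_{\text{blocks}}(\text{length})^s$. $m$-twist system (parameter $\rho$): at each time $t$, relabel the agents so that their positions satisfy $x_1\le\dots\le x_n$. A partition of $[n]$ into at most $m$ intervals of consecutive indices $[u_{t,l},v_{t,l}]$ (the blocks) is specified. The next positions, again sorted as $y_1\le\dots\le y_n$ (agents keep their ranks), are any positions satisfying, for every block $[u,v]$ and every $i\in[u,v]$, $$(1-\rho)x_u+\rho x_{\min\{i+1,v\}}\le y_i\le\rho x_{\max\{i-1,u\}}+(1-\rho)x_v.$$ The $s$-energy of a twist system is $\sum_{t\ge0}\sum_l\big(x_{v_{t,l}}(t)-x_{u_{t,l}}(t)\big)^s$. *)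

(* Defs.v *)
From HB Require Import structures.
From mathcomp Require Import all_boot all_order all_algebra.
From mathcomp Require Import all_classical all_reals all_analysis.
Set Implicit Arguments. Unset Strict Implicit. Unset Printing Implicit Defensive.
Import Order.TTheory GRing.Theory Num.Theory.
Local Open Scope ring_scope.

Section Defs.
Variable R : realType.

Definition avg_step_ok (n : nat) (rho : R) (G : rel 'I_n) (P : 'M[R]_n) : Prop :=
  [/\ (forall i, G i i) /\ (forall i j, G i j = G j i),
      (forall i j, 0 <= P i j),
      (forall i, \sum_(j < n) P i j = 1),
      (forall i j, (0 < P i j) = G i j) &
      (forall i j, P i j != 0 -> rho <= P i j)].

Definition in_edge_union (n : nat) (x : 'I_n -> R) (G : rel 'I_n) (y : R) : Prop :=
  exists i j, [/\ i != j, G i j &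
    Num.min (x i) (x j) <= y <= Num.max (x i) (x j)].

(* [a,b] is a block: a maximal interval of that union (such maximal
   intervals are closed since the union is a finite union of closed
   intervals). *)
Definition is_block (n : nat) (x : 'I_n -> R) (G : rel 'I_n) (a b : R) : Prop :=
  [/\ a <= b,
      (forall y, a <= y <= b -> in_edge_union x G y) &
      (forall c d, c <= a -> b <= d ->
         (forall y, c <= y <= d -> in_edge_union x G y) -> c = a /\ d = b)].

Definition avg_energy (n : nat) (s : R) (x : nat -> 'I_n -> R)
  (G : nat -> rel 'I_n) : \bar R :=
  (\sum_(0 <= t <oo)
     \esum_(p in [set p : R * R | is_block (x t) (G t) p.1 p.2])
        ((p.2 - p.1) `^ s)%:E)%E.

(* sorted positions x_1 <= ... <= x_n (as a sequence indexed from 0) *)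
Definition sorted_pos (n : nat) (x : 'I_n -> R) : seq R :=
  sort <=%R [seq x i | i <- enum 'I_n].

Definition twist_partition (n m : nat) (B : seq (nat * nat)) : Prop :=
  [/\ (size B <= m)%N,
      (forall p, p \in B -> (p.1 <= p.2 < n)%N) &
      (forall k, (k < n)%N -> count (fun p : nat * nat => (p.1 <= k <= p.2)%N) B = 1%N)].

Definition twist_step (rho : R) (B : seq (nat * nat)) (x y : seq R) : Prop :=
  forall p, p \in B -> forall i, (p.1 <= i <= p.2)%N ->
    (1 - rho) * x`_p.1 + rho * x`_(minn i.+1 p.2) <= y`_i /\
    y`_i <= rho * x`_(maxn i.-1 p.1) + (1 - rho) * x`_p.2.

Definition twist_system (n m : nat) (rho : R) (z : nat -> seq R)
  (B : nat -> seq (nat * nat)) : Prop :=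
  forall t, [/\ size (z t) = n, sorted <=%R (z t), twist_partition n m (B t) &
                twist_step rho (B t) (z t) (z t.+1)].

Definition twist_energy (s : R) (z : nat -> seq R) (B : nat -> seq (nat * nat)) : \bar R :=
  (\sum_(0 <= t <oo)
     (\sum_(p <- B t) ((z t)`_p.2 - (z t)`_p.1) `^ s)%:E)%E.

End Defs.

(* Main.v *)
Require Import Defs.
From HB Require Import structures.
From mathcomp Require Import all_boot all_order all_algebra.
From mathcomp Require Import all_classical all_reals all_analysis.
From mathcomp Require Import zify ring lra.
Import Order.TTheory GRing.Theory Num.Theory.
Local Open Scope ring_scope.
Set Implicit Arguments. Unset Strict Implicit.

Section Srt.
Variable R : realType.
Implicit Types (y : seq R) (L r : R).

Lemma srt_ge L y i : sorted <=%R y -> (i < size y)%N ->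
  (size y - i <= count (fun r => (L <= r)%R) y)%N -> L <= y`_i.
Proof.
elim: y i => [|r y IH] i //= Hs Hi Hc.
have Hy : sorted <=%R y := path_sorted Hs.
have Hall := order_path_min le_trans Hs.
case: i Hi Hc => [|i] Hi Hc /=.
  move: Hc; rewrite subn0; case: (boolP (L <= r)) => //= _.
  by rewrite add0n ltnNge count_size.
case: (boolP (L <= r)) => HL.
  apply: le_trans HL _; exact: (all_nthP 0 Hall).
apply: IH => //; move: Hc; rewrite subSS (negbTE HL) add0n //.
Qed.

Lemma srt_le U y i : sorted <=%R y -> (i < size y)%N ->
  (i < count (fun r => (r <= U)%R) y)%N -> y`_i <= U.
Proof.
elim: y i => [|r y IH] i //= Hs Hi Hc.
have Hy : sorted <=%R y := path_sorted Hs.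
have Hall := order_path_min le_trans Hs.
case: i Hi Hc => [|i] Hi Hc /=.
  case: (boolP (r <= U)) Hc => // HU; rewrite add0n => Hc.
  have [r' Hr' HrU] : exists2 r', r' \in y & r' <= U.
    by apply/hasP; rewrite has_count.
  by move/allP: Hall => /(_ _ Hr') Hrr; rewrite (le_trans Hrr HrU) in HU.
apply: IH => //; move: Hc; case: (r <= U) => /=; rewrite ?add1n ?add0n ?ltnS // => H; exact: ltnW.
Qed.

Lemma srt_cnt_ge y c : sorted <=%R y -> (c < size y)%N ->
  (size y - c <= count (fun r => (y`_c <= r)%R) y)%N.
Proof.
elim: y c => [|r y IH] c //= Hs Hc.
have Hy : sorted <=%R y := path_sorted Hs.
have Hall := order_path_min le_trans Hs.
case: c Hc => [|c] Hc /=.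
  rewrite lexx /= add1n subn0 ltnS.
  by rewrite (@eq_in_count _ _ predT) ?count_predT // => t /(allP Hall).
rewrite subSS; apply: leq_trans (IH c Hy Hc) _; exact: leq_addl.
Qed.

Lemma srt_cnt_le y c : sorted <=%R y -> (c < size y)%N ->
  (c < count (fun r => (r <= y`_c)%R) y)%N.
Proof.
elim: y c => [|r y IH] c //= Hs Hc.
have Hy : sorted <=%R y := path_sorted Hs.
have Hall := order_path_min le_trans Hs.
case: c Hc => [|c] Hc /=.
  by rewrite lexx.
have -> : r <= y`_c by exact: (all_nthP 0 Hall).
by rewrite add1n ltnS; apply: IH.
Qed.

Lemma srt_mono y i j : sorted <=%R y -> (i <= j)%N -> (j < size y)%N -> (y`_i <= y`_j)%R.
Proof.
move=> Hs Hij Hj; apply: (sorted_leq_nth le_trans lexx 0 Hs); rewrite ?inE //=.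
exact: leq_ltn_trans Hij Hj.
Qed.

Lemma srt_idx (p : pred R) y k : sorted <=%R y ->
  (forall a b, a <= b -> p b -> p a) -> (k < size y)%N ->
  (k < count p y)%N = p y`_k.
Proof.
move=> Hs0 Hdc; elim: y k Hs0 => [|r y IH] k //= Hs Hk.
have Hy : sorted <=%R y := path_sorted Hs.
have Hall := order_path_min le_trans Hs.
have Hnot : ~~ p r -> count p y = 0%N.
  move=> Hr; apply/eqP; rewrite -leqn0 leqNgt -has_count; apply/hasP => -[t Ht pt].
  by move/allP: Hall => /(_ _ Ht) Hrt; rewrite (Hdc _ _ Hrt pt) in Hr.
case: k Hk => [|k] Hk /=.
  by case: (boolP (p r)) => Hr //=; rewrite Hnot.
case: (boolP (p r)) => Hr /=.
  by rewrite add1n ltnS IH.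
rewrite add0n Hnot //; apply/esym/negbTE; apply: contra Hr; apply: Hdc.
exact: (all_nthP 0 Hall).
Qed.

End Srt.
Section Geo.
Variables (R : realType) (n : nat) (G : rel 'I_n) (x : 'I_n -> R).
Hypothesis Gsym : forall i j, G i j = G j i.

Definition inU (y : R) := [exists i, exists j, [&& i != j, G i j &
  (Num.min (x i) (x j) <= y <= Num.max (x i) (x j))]].

Lemma inUP y : reflect (in_edge_union x G y) (inU y).
Proof.
rewrite /inU; apply: (iffP existsP) => [[i /existsP [j /and3P [H1 H2 H3]]]|[i [j [H1 H2 H3]]]].
  by rewrite /in_edge_union; exists i, j; split.
by exists i; apply/existsP; exists j; apply/and3P.
Qed.

Definition covered (c d : R) := forall y, c <= y <= d -> in_edge_union x G y.

Lemma edge_cov i j p : i != j -> G i j -> x i <= p <= x j -> in_edge_union x G p.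
Proof.
move=> Hij HG /andP [H1 H2]; rewrite /in_edge_union; exists i, j; split => //.
by rewrite ge_min le_max H1 H2 orbT.
Qed.

Lemma edge_or y : in_edge_union x G y ->
  exists i j, [/\ i != j, G i j, x i <= y & y <= x j].
Proof.
move=> [i [j [Hij HG /andP [H1 H2]]]].
case: (leP (x i) (x j)) => Hle.
  exists i, j; split => //.
    by move: H1; rewrite (min_idPl Hle).
  by move: H2; rewrite (max_idPr Hle).
exists j, i; split => //.
- by rewrite eq_sym.
- by rewrite Gsym.
- by move: H1; rewrite (min_idPr (ltW Hle)).
- by move: H2; rewrite (max_idPl (ltW Hle)).
Qed.

Lemma ext_left c d a y : covered c d -> c < a -> a <= y -> y <= d ->
  exists i, x i < a /\ covered (x i) y.
Proof.
move=> Hcov Hca Hay Hyd.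
pose q := (c + a) / 2.
have Hcq : c <= q by rewrite /q; lra.
have Hqa : q < a by rewrite /q; lra.
have Hqd : q <= d by apply: le_trans (ltW Hqa) (le_trans Hay Hyd).
have [i [j [Hij HG Hiq Hqj]]] := edge_or (Hcov q (introT andP (conj Hcq Hqd))).
exists i; split; first exact: le_lt_trans Hiq Hqa.
move=> p /andP [Hp1 Hp2].
case: (leP p q) => Hpq.
  by apply: (edge_cov Hij HG); rewrite Hp1 (le_trans Hpq Hqj).
apply: Hcov; rewrite (le_trans Hcq (ltW Hpq)) /=; exact: le_trans Hp2 Hyd.
Qed.

Lemma ext_right c d b y : covered c d -> b < d -> c <= y -> y <= b ->
  exists j, b < x j /\ covered y (x j).
Proof.
move=> Hcov Hbd Hcy Hyb.
pose q := (b + d) / 2.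
have Hqd : q <= d by rewrite /q; lra.
have Hbq : b < q by rewrite /q; lra.
have Hcq : c <= q by apply: le_trans Hcy (le_trans Hyb (ltW Hbq)).
have [i [j [Hij HG Hiq Hqj]]] := edge_or (Hcov q (introT andP (conj Hcq Hqd))).
exists j; split; first exact: lt_le_trans Hbq Hqj.
move=> p /andP [Hp1 Hp2].
case: (leP q p) => Hpq.
  by apply: (edge_cov Hij HG); rewrite Hp2 (le_trans Hiq Hpq).
apply: Hcov; rewrite (le_trans Hcy Hp1) /=; exact: le_trans (ltW Hpq) Hqd.
Qed.

Lemma cov_cat a b c : covered a b -> covered b c -> covered a c.
Proof.
move=> H1 H2 p /andP [Hp1 Hp2]; case: (leP p b) => Hpb.
  by apply: H1; rewrite Hp1 Hpb.
by apply: H2; rewrite (ltW Hpb) Hp2.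
Qed.

Lemma blk_cov a b : is_block x G a b -> covered a b.
Proof. by case. Qed.

Lemma blk_max a b c d : is_block x G a b -> c <= a -> b <= d -> covered c d ->
  c = a /\ d = b.
Proof. by case=> _ _ H; apply: H. Qed.

Lemma blk_le a b : is_block x G a b -> a <= b.
Proof. by case. Qed.

Lemma block_of y : in_edge_union x G y ->
  exists a b, is_block x G a b /\ a <= y <= b.
Proof.
move=> Hy; have [i0 [j0 [Hij HG Hi0 Hj0]]] := edge_or Hy.
pose cL i := `[< x i <= y /\ covered (x i) y >].
pose cR j := `[< y <= x j /\ covered y (x j) >].
have cL0 : cL i0.
  apply/asboolP; split => // p /andP [H1 H2].
  by apply: (edge_cov Hij HG); rewrite H1 (le_trans H2 Hj0).
have cR0 : cR j0.
  apply/asboolP; split => // p /andP [H1 H2].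
  by apply: (edge_cov Hij HG); rewrite H2 (le_trans Hi0 H1).
case: (arg_minP x cL0) => ia /asboolP [Hia1 Hia2] Hmin.
case: (arg_maxP x cR0) => ib /asboolP [Hib1 Hib2] Hmax.
exists (x ia), (x ib); split; last by rewrite Hia1 Hib1.
split; first exact: le_trans Hia1 Hib1.
  exact: cov_cat Hia2 Hib2.
move=> c d Hc Hd Hcov; split.
  apply/eqP; rewrite eq_le Hc /=; rewrite leNgt; apply/negP => Hlt.
  have [i [Hi Hcovi]] := ext_left Hcov Hlt Hia1 (le_trans Hib1 Hd).
  have Hci : cL i by apply/asboolP; split => //; exact: le_trans (ltW Hi) Hia1.
  by have := Hmin i Hci; rewrite leNgt Hi.
apply/eqP; rewrite eq_le Hd andbT; rewrite leNgt; apply/negP => Hlt.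
have [j [Hj Hcovj]] := ext_right Hcov Hlt (le_trans Hc Hia1) Hib1.
have Hcj : cR j by apply/asboolP; split => //; exact: le_trans Hib1 (ltW Hj).
by have := lt_le_trans Hj (Hmax j Hcj); rewrite ltxx.
Qed.

Lemma blk_uniq a b a' b' y : is_block x G a b -> is_block x G a' b' ->
  a <= y <= b -> a' <= y <= b' -> a = a' /\ b = b'.
Proof.
move=> B1 B2 /andP [H1 H2] /andP [H1' H2'].
have Hc : covered (Num.min a a') (Num.max b b').
  move=> p /andP [Hp1 Hp2]; case: (leP p y) => Hpy.
    case: (leP a p) => Hap.
      by apply: (blk_cov B1); rewrite Hap (le_trans Hpy H2).
    have Ha'p : a' <= p by move: Hp1; rewrite ge_min leNgt Hap.
    by apply: (blk_cov B2); rewrite Ha'p (le_trans Hpy H2').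
  case: (leP p b) => Hpb.
    by apply: (blk_cov B1); rewrite Hpb (le_trans H1 (ltW Hpy)).
  have Hpb' : p <= b' by move: Hp2; rewrite le_max leNgt Hpb.
  by apply: (blk_cov B2); rewrite Hpb' (le_trans H1' (ltW Hpy)).
have m1 : Num.min a a' <= a by rewrite ge_min lexx.
have m2 : Num.min a a' <= a' by rewrite ge_min lexx orbT.
have m3 : b <= Num.max b b' by rewrite le_max lexx.
have m4 : b' <= Num.max b b' by rewrite le_max lexx orbT.
have [E1 F1] := blk_max B1 m1 m3 Hc.
have [E2 F2] := blk_max B2 m2 m4 Hc.
by split; [exact: etrans (esym E1) E2 | exact: etrans (esym F1) F2].
Qed.

Lemma blk_endl a b : is_block x G a b -> exists i, x i = a.
Proof.
move=> B1; have Hab := blk_le B1.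
have [i [j [Hij HG Hi Hj]]] := edge_or (blk_cov B1 (introT andP (conj (lexx a) Hab))).
exists i; apply/eqP; rewrite eq_le Hi /= leNgt; apply/negP => Hlt.
have Hc : covered (x i) b.
  move=> p /andP [Hp1 Hp2]; case: (leP p a) => Hpa.
    by apply: (edge_cov Hij HG); rewrite Hp1 (le_trans Hpa Hj).
  by apply: (blk_cov B1); rewrite (ltW Hpa) Hp2.
have [E _] := blk_max B1 (ltW Hlt) (lexx b) Hc.
by move: Hlt; rewrite E ltxx.
Qed.

Lemma blk_endr a b : is_block x G a b -> exists j, x j = b.
Proof.
move=> B1; have Hab := blk_le B1.
have [i [j [Hij HG Hi Hj]]] := edge_or (blk_cov B1 (introT andP (conj Hab (lexx b)))).
exists j; apply/eqP; rewrite eq_le Hj andbT leNgt; apply/negP => Hlt.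
have Hc : covered a (x j).
  move=> p /andP [Hp1 Hp2]; case: (leP p b) => Hpb.
    by apply: (blk_cov B1); rewrite Hp1 Hpb.
  by apply: (edge_cov Hij HG); rewrite Hp2 (le_trans Hi (ltW Hpb)).
have [_ E] := blk_max B1 (lexx a) (ltW Hlt) Hc.
by move: Hlt; rewrite E ltxx.
Qed.

Definition leftbar (a : R) := forall i j, G i j -> a <= x j -> a <= x i.
Definition rightbar (b : R) := forall i j, G i j -> x j <= b -> x i <= b.

Lemma blk_leftbar a b : is_block x G a b -> leftbar a.
Proof.
move=> B1 i j HG Hj; rewrite leNgt; apply/negP => Hlt.
have Hij : i != j by apply/eqP => E; subst; move: Hlt; rewrite ltNge Hj.
have Hc : covered (x i) b.
  move=> p /andP [Hp1 Hp2]; case: (leP p a) => Hpa.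
    by apply: (edge_cov Hij HG); rewrite Hp1 (le_trans Hpa Hj).
  by apply: (blk_cov B1); rewrite (ltW Hpa) Hp2.
have [E _] := blk_max B1 (ltW Hlt) (lexx b) Hc.
by move: Hlt; rewrite E ltxx.
Qed.

Lemma blk_rightbar a b : is_block x G a b -> rightbar b.
Proof.
move=> B1 i j HG Hj; rewrite leNgt; apply/negP => Hlt.
have Hij : j != i by apply/eqP => E; subst; move: Hlt; rewrite ltNge Hj.
have HG' : G j i by rewrite Gsym.
have Hc : covered a (x i).
  move=> p /andP [Hp1 Hp2]; case: (leP p b) => Hpb.
    by apply: (blk_cov B1); rewrite Hp1 Hpb.
  by apply: (edge_cov Hij HG'); rewrite Hp2 (le_trans Hj (ltW Hpb)).
have [_ E] := blk_max B1 (lexx a) (ltW Hlt) Hc.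
by move: Hlt; rewrite E ltxx.
Qed.

Lemma pt_leftbar y : ~ in_edge_union x G y -> leftbar y.
Proof.
move=> Hy i j HG Hj; rewrite leNgt; apply/negP => Hlt; apply: Hy.
have Hij : i != j by apply/eqP => E; subst; move: Hlt; rewrite ltNge Hj.
by apply: (edge_cov Hij HG); rewrite (ltW Hlt) Hj.
Qed.

Lemma pt_rightbar y : ~ in_edge_union x G y -> rightbar y.
Proof.
move=> Hy i j HG Hj; rewrite leNgt; apply/negP => Hlt; apply: Hy.
have Hij : j != i by apply/eqP => E; subst; move: Hlt; rewrite ltNge Hj.
have HG' : G j i by rewrite Gsym.
by apply: (edge_cov Hij HG'); rewrite (ltW Hlt) Hj.
Qed.

Lemma blk_closed a b : is_block x G a b ->
  fingraph.closed G [pred i | (a <= x i) && (x i <= b)].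
Proof.
move=> B1 i j HG; rewrite !inE.
have HG' : G j i by rewrite Gsym.
apply/idP/idP => /andP [H1 H2].
  by rewrite (blk_leftbar B1 HG' H1) (blk_rightbar B1 HG' H2).
by rewrite (blk_leftbar B1 HG H1) (blk_rightbar B1 HG H2).
Qed.

Lemma iso_closed j : ~ in_edge_union x G (x j) -> fingraph.closed G (pred1 j).
Proof.
move=> Hj i k HG; rewrite !inE.
case: (eqVneq i j) => [E|Hij]; case: (eqVneq k j) => [E'|Hkj]; subst => //.
- exfalso; apply: Hj; rewrite /in_edge_union; exists j, k; split.
  + by rewrite eq_sym.
  + by move: HG.
  + by rewrite ge_min le_max !lexx.
- exfalso; apply: Hj; rewrite /in_edge_union; exists i, j; split => //.
  by rewrite ge_min le_max !lexx !orbT.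
Qed.

Definition zs := sorted_pos x.

Lemma zs_size : size zs = n.
Proof. by rewrite /zs /sorted_pos size_sort size_map size_enum_ord. Qed.

Lemma zs_sorted : sorted <=%R zs.
Proof. by rewrite /zs /sorted_pos; apply: sort_sorted; exact: le_total. Qed.

Lemma zs_count (p : pred R) : count p zs = count (fun j => p (x j)) (enum 'I_n).
Proof.
have H : perm_eq zs (map x (enum 'I_n)) by rewrite /zs /sorted_pos perm_sort perm_refl.
by rewrite (permP H) count_map.
Qed.

Lemma zs_memx j : x j \in zs.
Proof. by rewrite /zs /sorted_pos mem_sort map_f // mem_enum. Qed.

Lemma zs_memP r : r \in zs -> exists j, r = x j.
Proof. by rewrite /zs /sorted_pos mem_sort => /mapP [j _ ->]; exists j. Qed.

Lemma zs_mono i j : (i <= j)%N -> (j < n)%N -> zs`_i <= zs`_j.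
Proof. by move=> Hij Hj; apply: srt_mono zs_sorted Hij _; rewrite zs_size. Qed.

Lemma zs_idx_lt a k : (k < n)%N -> (k < count (fun r => (r < a)%R) zs)%N = (zs`_k < a).
Proof.
move=> Hk; apply: srt_idx zs_sorted _ _; last by rewrite zs_size.
by move=> c d Hcd Hd; exact: le_lt_trans Hcd Hd.
Qed.

Lemma zs_idx_le b k : (k < n)%N -> (k < count (fun r => (r <= b)%R) zs)%N = (zs`_k <= b).
Proof.
move=> Hk; apply: srt_idx zs_sorted _ _; last by rewrite zs_size.
by move=> c d Hcd Hd; exact: le_trans Hcd Hd.
Qed.

Definition bpair (a b : R) : nat * nat :=
  (count (fun r => (r < a)%R) zs, (count (fun r => (r <= b)%R) zs).-1).

Lemma bpairP a b : is_block x G a b ->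
  [/\ ((bpair a b).1 <= (bpair a b).2)%N, ((bpair a b).2 < n)%N,
      zs`_(bpair a b).1 = a, zs`_(bpair a b).2 = b &
      forall k, (k < n)%N -> ((bpair a b).1 <= k <= (bpair a b).2)%N = (a <= zs`_k <= b)].
Proof.
move=> B1; rewrite /bpair /=.
set u := count _ zs; set w := count _ zs.
have [i Hi] := blk_endl B1; have [j Hj] := blk_endr B1.
have Hab := blk_le B1.
have Ha : a \in zs by rewrite -Hi zs_memx.
have Hb : b \in zs by rewrite -Hj zs_memx.
pose ma := index a zs; pose mb := index b zs.
have Hma : (ma < n)%N by rewrite -zs_size index_mem.
have Hmb : (mb < n)%N by rewrite -zs_size index_mem.
have Ema : zs`_ma = a by rewrite nth_index.
have Emb : zs`_mb = b by rewrite nth_index.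
have Hum : (u <= ma)%N by rewrite leqNgt zs_idx_lt // Ema ltxx.
have Hmw : (mb < w)%N by rewrite zs_idx_le // Emb lexx.
have Hwn : (w <= n)%N by rewrite -zs_size count_size.
clearbody ma mb.
have Hv : (w.-1 < n)%N by lia.
have Hu : (u < n)%N by lia.
have Hch : forall k, (k < n)%N -> (u <= k <= w.-1)%N = (a <= zs`_k <= b).
  move=> k Hk; have -> : (k <= w.-1)%N = (k < w)%N by lia.
  by rewrite leqNgt zs_idx_lt // zs_idx_le // -leNgt.
have Ezu : zs`_u = a.
  have H1 : zs`_u <= a by rewrite -Ema; apply: zs_mono.
  have H2 : a <= zs`_u by rewrite leNgt -zs_idx_lt // ltnn.
  by apply/eqP; rewrite eq_le H1 H2.
have Ezv : zs`_(w.-1) = b.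
  have H1 : b <= zs`_(w.-1) by rewrite -Emb; apply: zs_mono => //; lia.
  have H2 : zs`_(w.-1) <= b by rewrite -zs_idx_le // -/w; lia.
  by apply/eqP; rewrite eq_le H1 H2.
split => //.
by have := Hch _ Hv; rewrite Ezv Hab lexx leqnn andbT /= => ->.
Qed.

Definition isBP (p : nat * nat) := exists a b, is_block x G a b /\ p = bpair a b.
Definition QB (p : nat * nat) : bool :=
  `[< isBP p >] || ((p.1 == p.2) && ~~ inU zs`_(p.1)).
Definition Bt := [seq p <- [seq (u, v) | u <- iota 0 n, v <- iota 0 n] | QB p].

Lemma Bt_mem p : (p \in Bt) = [&& QB p, (p.1 < n)%N & (p.2 < n)%N].
Proof.
rewrite mem_filter; congr (_ && _).
apply/allpairsP/andP => [[[u v] /= [Hu Hv ->]]|[Hu Hv]] /=.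
  by move: Hu Hv; rewrite !mem_iota !add0n.
by exists (p.1, p.2); rewrite !mem_iota !add0n Hu Hv -surjective_pairing.
Qed.

Lemma Bt_uniq : uniq Bt.
Proof.
apply: filter_uniq; apply: allpairs_uniq; rewrite ?iota_uniq //.
by move=> [? ?] [? ?] _ _ /=.
Qed.

Lemma Bt_cases p : p \in Bt ->
  (exists a b, is_block x G a b /\ p = bpair a b) \/
  (p.1 = p.2 /\ (p.1 < n)%N /\ ~ in_edge_union x G zs`_(p.1)).
Proof.
rewrite Bt_mem => /and3P [/orP [/asboolP H|/andP [/eqP E /inUP H]] H1 H2].
  by left.
by right.
Qed.

Lemma Bt_bounds p : p \in Bt -> (p.1 <= p.2)%N /\ (p.2 < n)%N.
Proof.
move=> Hp; case: (Bt_cases Hp) => [[a [b [B1 ->]]]|[E [H _]]].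
  by case: (bpairP B1).
by rewrite -E.
Qed.

Lemma Bt_cover k : (k < n)%N -> exists2 p, p \in Bt & (p.1 <= k <= p.2)%N.
Proof.
move=> Hk; case: (boolP (inU zs`_k)) => /inUP H.
  have [a [b [B1 Hy]]] := block_of H.
  have [H1 H2 _ _ Hch] := bpairP B1.
  exists (bpair a b); last by rewrite Hch.
  rewrite Bt_mem H2 (leq_ltn_trans H1 H2) andbT.
  have HB : isBP (bpair a b) by exists a, b.
  by rewrite /QB (asboolT HB).
exists (k, k); last by rewrite /= leqnn.
rewrite Bt_mem /QB /= Hk andbT.
have -> : (k == k) = true by apply/eqP.
have -> : ~~ inU zs`_k by apply/negP => /inUP.
by rewrite orbT.
Qed.

Lemma Bt_unique p q k : p \in Bt -> q \in Bt -> (k < n)%N ->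
  (p.1 <= k <= p.2)%N -> (q.1 <= k <= q.2)%N -> p = q.
Proof.
move=> Hp Hq Hk Hpk Hqk.
case: (Bt_cases Hp) => [[a [b [B1 Ep]]]|[Ep [_ Hnp]]];
case: (Bt_cases Hq) => [[a' [b' [B2 Eq]]]|[Eq [_ Hnq]]].
- have [_ _ _ _ Hch] := bpairP B1; have [_ _ _ _ Hch'] := bpairP B2.
  move: Hpk Hqk; rewrite Ep Eq Hch // Hch' // => H1 H2.
  by have [-> ->] := blk_uniq B1 B2 H1 H2.
- have [_ _ _ _ Hch] := bpairP B1.
  have Ek : q.1 = k by move: Hqk; rewrite -Eq; lia.
  exfalso; apply: Hnq; rewrite Ek; apply: (blk_cov B1).
  by rewrite -Hch // -Ep.
- have [_ _ _ _ Hch] := bpairP B2.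
  have Ek : p.1 = k by move: Hpk; rewrite -Ep; lia.
  exfalso; apply: Hnp; rewrite Ek; apply: (blk_cov B2).
  by rewrite -Hch // -Eq.
- have Ek : p.1 = k by move: Hpk; rewrite -Ep; lia.
  have Ek' : q.1 = k by move: Hqk; rewrite -Eq; lia.
  by rewrite [p]surjective_pairing [q]surjective_pairing -Ep -Eq Ek Ek'.
Qed.

Lemma count1 (T : eqType) (s : seq T) (q : pred T) : uniq s ->
  (exists2 p, p \in s & q p) ->
  {in s &, forall p1 p2, q p1 -> q p2 -> p1 = p2} -> count q s = 1%N.
Proof.
elim: s => [|a s IH] /=; first by move=> _ [p].
move=> /andP [Ha Hs] [p Hp Hqp] Hu.
case: (boolP (q a)) => Hqa /=.
  rewrite add1n; congr S; apply/eqP; rewrite -leqn0 leqNgt -has_count.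
  apply/hasP => -[r Hr Hqr].
  have E : r = a by apply: Hu; rewrite ?inE ?eqxx ?Hr ?orbT.
  by rewrite -E Hr in Ha.
rewrite add0n; apply: IH => //.
  exists p => //; move: Hp; rewrite inE => /orP [/eqP E|//].
  by rewrite -E Hqp in Hqa.
by move=> p1 p2 H1 H2; apply: Hu; rewrite inE ?H1 ?H2 orbT.
Qed.

Lemma Bt_count k : (k < n)%N ->
  count (fun p : nat * nat => (p.1 <= k <= p.2)%N) Bt = 1%N.
Proof.
move=> Hk; apply: count1; first exact: Bt_uniq.
  exact: Bt_cover.
by move=> p q Hp Hq H1 H2; apply: (Bt_unique Hp Hq Hk).
Qed.

Hypothesis Gsym' : symmetric G.

Lemma iso_root j : ~~ inU (x j) -> fingraph.root G j = j.
Proof.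
move=> /inUP Hj; have := closed_connect (iso_closed Hj) (connect_root G j).
by rewrite !inE eqxx => /esym/eqP.
Qed.

Lemma Bt_size : (size Bt <= n_comp G predT)%N.
Proof.
have Csym : connect_sym G := sym_connect_sym Gsym'.
pose sblk p := `[< isBP p >].
rewrite -(count_predC sblk Bt).
pose S2 := [seq j <- enum 'I_n | ~~ inU (x j)].
have HS2u : uniq S2 by rewrite filter_uniq // enum_uniq.
have HS2r : {subset S2 <= enum (predI (roots G) (mem predT))}.
  move=> j; rewrite mem_filter => /andP [Hj _].
  by rewrite mem_enum !inE /roots /= (iso_root Hj) eqxx.
have Hsing : (count (predC sblk) Bt <= size S2)%N.
  pose S1 := [seq p.1 | p <- Bt & predC sblk p].
  have -> : count (predC sblk) Bt = size S1 by rewrite size_map size_filter.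
  have HS1 : forall p, p \in [seq p <- Bt | predC sblk p] ->
      p = (p.1, p.1) /\ (p.1 < n)%N /\ ~ in_edge_union x G zs`_(p.1).
    move=> p; rewrite mem_filter => /andP [Hn Hp].
    case: (Bt_cases Hp) => [[a [b [B1 E]]]|[E [H1 H2]]].
      by move: Hn; rewrite /= /sblk asboolT //; exists a, b.
    by rewrite [p in p = _]surjective_pairing -E.
  have HS1u : uniq S1.
    rewrite map_inj_in_uniq; first exact: (filter_uniq _ Bt_uniq).
    move=> p q Hp Hq E.
    by have [-> _] := HS1 _ Hp; have [-> _] := HS1 _ Hq; rewrite E.
  have -> : size S2 = size [seq k <- iota 0 n | ~~ inU zs`_k].
    rewrite !size_filter -[in RHS]zs_size.
    have -> : count (fun k => ~~ inU zs`_k) (iota 0 (size zs)) =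
              count (fun r => ~~ inU r) zs.
      by rewrite -[in RHS](mkseq_nth 0 zs) /mkseq count_map.
    by rewrite zs_count.
  apply: uniq_leq_size => // k /mapP [p Hp ->].
  have [_ [H1 H2]] := HS1 _ Hp.
  rewrite mem_filter mem_iota add0n H1 leq0n andbT /=.
  rewrite andbT; apply/negP => Hc; apply: H2; exact: (elimT (inUP _) Hc).
case: (boolP (has sblk Bt)) => Hhas; last first.
  move: Hhas; rewrite has_count -leqNgt leqn0 => /eqP ->; rewrite add0n.
  apply: leq_trans Hsing _; rewrite /n_comp_mem cardE.
  exact: uniq_leq_size HS2u HS2r.
have [j0 _] : exists j0 : 'I_n, True.
  move/hasP: Hhas => [p _ /asboolP [a [b [B1 _]]]].
  by have [i _] := blk_endl B1; exists i.
pose ag (p : nat * nat) := odflt j0 [pick j | x j == zs`_(p.1)].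
have Hag : forall p, sblk p -> exists a b,
    [/\ is_block x G a b, p = bpair a b & x (ag p) = a].
  move=> p /asboolP [a [b [B1 E]]]; exists a, b; split => //.
  have [_ _ Ea _ _] := bpairP B1.
  rewrite /ag; case: pickP => [j /eqP -> /=|Hn]; first by rewrite E.
  have [i Hi] := blk_endl B1.
  by have := Hn i; rewrite Hi -Ea -E eqxx.
pose f (p : nat * nat) := fingraph.root G (ag p).
pose S := [seq f p | p <- Bt & sblk p] ++ S2.
have HSu : uniq S.
  rewrite cat_uniq HS2u andbT; apply/andP; split.
    rewrite map_inj_in_uniq; first exact: (filter_uniq _ Bt_uniq).
    move=> p q; rewrite !mem_filter => /andP [Hp _] /andP [Hq _] E.
    have [a [b [B1 Ep Ea]]] := Hag p Hp.
    have [a' [b' [B2 Eq Ea']]] := Hag q Hq.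
    have Hc : connect G (ag p) (ag q) by rewrite -root_connect //; apply/eqP; exact: E.
    have := closed_connect (blk_closed B1) Hc; rewrite !inE Ea lexx (blk_le B1) /=.
    move=> /esym Hin.
    have Hin' : a' <= x (ag q) <= b' by rewrite Ea' lexx (blk_le B2).
    by have [E1 E2] := blk_uniq B1 B2 Hin Hin'; rewrite Ep Eq E1 E2.
  apply/hasPn => j Hj; apply/negP => /mapP [p]; rewrite mem_filter => /andP [Hp _] Ej.
  move: Hj; rewrite mem_filter => /andP [/inUP Hj _]; apply: Hj.
  have [a [b [B1 Ep Ea]]] := Hag p Hp.
  have Hc : connect G (ag p) j by rewrite Ej; exact: connect_root.
  have := closed_connect (blk_closed B1) Hc; rewrite !inE Ea lexx (blk_le B1) /=.
  by move=> /esym Hin; apply: (blk_cov B1).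
have HSr : {subset S <= enum (predI (roots G) (mem predT))}.
  move=> j; rewrite mem_cat => /orP [/mapP [p _ ->]|/HS2r //].
  by rewrite mem_enum !inE /roots /= /f (root_root Csym) eqxx.
have := uniq_leq_size HSu HSr; rewrite size_cat size_map size_filter -cardE.
move=> H; apply: leq_trans H; rewrite leq_add2l //.
Qed.
Lemma zs_between r i : r \in zs -> (i.+1 < n)%N ->
  (r < (zs)`_i.+1 -> r <= (zs)`_i) /\ ((zs)`_i < r -> (zs)`_i.+1 <= r).
Proof.
move=> Hr Hi; have Hm : (index r (zs) < size (zs))%N by rewrite index_mem.
rewrite zs_size in Hm.
have Em : (zs)`_(index r (zs)) = r by rewrite nth_index.
split => H.
  case: (leqP (index r (zs)) i) => Hmi.
    by rewrite -Em; apply: zs_mono => //; lia.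
  by move: H; rewrite -Em ltNge (zs_mono Hmi Hm).
case: (leqP (index r (zs)) i) => Hmi.
  have Hin : (i < n)%N by lia.
  by move: H; rewrite -Em ltNge (zs_mono Hmi Hin).
by rewrite -Em; apply: zs_mono.
Qed.

End Geo.

Section Step.
Variables (R : realType) (n : nat) (G : rel 'I_n) (x : 'I_n -> R) (P : 'M[R]_n) (rho : R).
Hypothesis Hok : avg_step_ok rho G P.
Hypothesis Hrho : 0 < rho.
Definition wstep (i : 'I_n) := \sum_(j < n) P i j * x j.

Lemma Gsym_ok : forall i j, G i j = G j i.
Proof. by case: Hok => [[_ H] _ _ _ _]. Qed.

Lemma Prho j k : G j k -> rho <= P j k.
Proof.
case: Hok => _ _ _ Hpos Hrh Hjk; apply: Hrh.
by rewrite -(Hpos j k) in Hjk; rewrite gt_eqF.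
Qed.

Lemma Pge0 j k : 0 <= P j k.
Proof. by case: Hok. Qed.

Lemma Psum j : \sum_(l < n) P j l = 1.
Proof. by case: Hok. Qed.

Lemma avg_lower a j k : (forall l, G j l -> a <= x l) -> G j k -> a <= x k ->
  rho * x k + (1 - rho) * a <= wstep j.
Proof.
move=> Hnb Hjk Hak.
have E : wstep j - a = \sum_(l < n) P j l * (x l - a).
  rewrite /wstep; under [X in _ = X]eq_bigr => l _ do rewrite mulrBr.
  by rewrite sumrB -mulr_suml Psum mul1r.
have H1 : P j k * (x k - a) <= wstep j - a.
  rewrite E (bigD1 k) //= lerDl; apply: sumr_ge0 => l _.
  case: (boolP (G j l)) => Hjl.
    by apply: mulr_ge0; [exact: Pge0 | rewrite subr_ge0; exact: Hnb].
  have -> : P j l = 0.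
    case: Hok => _ _ _ Hpos _; apply/eqP; rewrite eq_le Pge0 andbT leNgt.
    by rewrite Hpos.
  by rewrite mul0r.
have H2 : rho * (x k - a) <= P j k * (x k - a).
  by apply: ler_wpM2r; [rewrite subr_ge0 | exact: Prho].
rewrite mulrBl mul1r; move: H1 H2; rewrite !mulrBr; lra.
Qed.

Lemma avg_upper b j k : (forall l, G j l -> x l <= b) -> G j k -> x k <= b ->
  wstep j <= rho * x k + (1 - rho) * b.
Proof.
move=> Hnb Hjk Hak.
have E : b - wstep j = \sum_(l < n) P j l * (b - x l).
  rewrite /wstep; under [X in _ = X]eq_bigr => l _ do rewrite mulrBr.
  by rewrite sumrB -mulr_suml Psum mul1r.
have H1 : P j k * (b - x k) <= b - wstep j.
  rewrite E (bigD1 k) //= lerDl; apply: sumr_ge0 => l _.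
  case: (boolP (G j l)) => Hjl.
    by apply: mulr_ge0; [exact: Pge0 | rewrite subr_ge0; exact: Hnb].
  have -> : P j l = 0.
    case: Hok => _ _ _ Hpos _; apply/eqP; rewrite eq_le Pge0 andbT leNgt.
    by rewrite Hpos.
  by rewrite mul0r.
have H2 : rho * (b - x k) <= P j k * (b - x k).
  by apply: ler_wpM2r; [rewrite subr_ge0 | exact: Prho].
rewrite mulrBl mul1r; move: H1 H2; rewrite !mulrBr; lra.
Qed.


Lemma count_add1 (a : pred 'I_n) (j0 : 'I_n) : ~~ a j0 ->
  (count a (enum 'I_n)).+1 = count (predU a (pred1 j0)) (enum 'I_n).
Proof.
move=> Hj0; have := count_predUI a (pred1 j0) (enum 'I_n).
have -> : count (predI a (pred1 j0)) (enum 'I_n) = 0%N.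
  apply/eqP; rewrite -leqn0 leqNgt -has_count; apply/hasPn => j _ /=.
  by apply/negP => /andP [Ha /eqP E]; move: Ha; rewrite E (negbTE Hj0).
have -> : count (pred1 j0) (enum 'I_n) = 1%N.
  by rewrite (count_uniq_mem j0 (enum_uniq 'I_n)) mem_enum.
by rewrite addn0 addn1.
Qed.

Lemma Grefl j : G j j.
Proof. by case: Hok => [[H _] _ _ _ _]. Qed.

Definition gapok (u v : nat) := forall i, (u <= i)%N -> (i < v)%N ->
  (zs x)`_i < (zs x)`_i.+1 ->
  exists j k, [/\ G j k, x j <= (zs x)`_i & (zs x)`_i.+1 <= x k].



Lemma twist_lower u v i : (u <= i)%N -> (i <= v)%N -> (v < n)%N ->
  leftbar G x (zs x)`_u -> gapok u v ->
  (1 - rho) * (zs x)`_u + rho * (zs x)`_(minn i.+1 v) <= (zs wstep)`_i.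
Proof.
move=> Hui Hiv Hvn Hlb Hgap.
set c := minn i.+1 v.
have Hcv : (c <= v)%N by rewrite /c geq_minr.
have Huc : (u <= c)%N by rewrite /c leq_min; apply/andP; split; lia.
have Hcn : (c < n)%N by lia.
set L := _ + _.
have HA : forall j, (zs x)`_c <= x j -> L <= wstep j.
  move=> j Hj; have Hu : (zs x)`_u <= x j by apply: le_trans (zs_mono x Huc Hcn) Hj.
  have Hnb : forall l, G j l -> (zs x)`_u <= x l.
    by move=> l Hl; apply: (Hlb l j) => //; rewrite Gsym_ok.
  have := avg_lower Hnb (Grefl j) Hu.
  have : rho * (zs x)`_c <= rho * x j by apply: ler_wpM2l => //; exact: ltW.
  rewrite /L; lra.
have Hbase : (n - c <= count (fun j => ((zs x)`_c <= x j)%R) (enum 'I_n))%N.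
  rewrite -(zs_count x (fun r => (zs x)`_c <= r)).
  have := @srt_cnt_ge _ (zs x) c (zs_sorted x); rewrite zs_size; apply.
  exact: Hcn.
apply: srt_ge; [exact: zs_sorted | by rewrite zs_size; lia | ].
rewrite zs_size zs_count.
have Hsub : (count (fun j => ((zs x)`_c <= x j)%R) (enum 'I_n) <=
             count (fun j => (L <= wstep j)%R) (enum 'I_n))%N.
  by apply: sub_count => j /= /HA.
case: (eqVneq i v) => [Eiv|Hiv'].
  have Ec : c = v by rewrite /c Eiv; apply/minn_idPr; exact: leqnSn.
  by apply: leq_trans Hsub; rewrite Eiv -Ec.
have Hiv2 : (i < v)%N by rewrite ltn_neqAle Hiv' Hiv.
have Ec : c = i.+1 by rewrite /c; apply/minn_idPl.
have Hin : (i.+1 < n)%N by lia.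
case: (eqVneq (zs x)`_i (zs x)`_i.+1) => [Ezz|Hzz].
  have H1 : (n - i <= count (fun j => ((zs x)`_i <= x j)%R) (enum 'I_n))%N.
    rewrite -(zs_count x (fun r => (zs x)`_i <= r)).
    have := @srt_cnt_ge _ (zs x) i (zs_sorted x); rewrite zs_size; apply.
    lia.
  apply: leq_trans Hsub; apply: leq_trans H1 _; apply: sub_count => j /=.
  by rewrite Ec Ezz.
have Hlt : (zs x)`_i < (zs x)`_i.+1.
  by rewrite lt_neqAle Hzz zs_mono.
have [j0 [k0 [Hjk Hj0 Hk0]]] := Hgap i Hui Hiv2 Hlt.
have Hk0u : (zs x)`_u <= x k0.
  by apply: le_trans Hk0; apply: zs_mono => //; lia.
have Hj0u : (zs x)`_u <= x j0 by apply: (Hlb j0 k0).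
have Hnb : forall l, G j0 l -> (zs x)`_u <= x l.
  by move=> l Hl; apply: (Hlb l j0) => //; rewrite Gsym_ok.
have Hw0 : L <= wstep j0.
  have := avg_lower Hnb Hjk Hk0u.
  have : rho * (zs x)`_c <= rho * x k0 by rewrite Ec; apply: ler_wpM2l => //; exact: ltW.
  rewrite /L; lra.
have Hnj0 : ~~ ((zs x)`_c <= x j0).
  by rewrite -ltNge Ec; exact: le_lt_trans Hj0 Hlt.
have E := @count_add1 (fun j => ((zs x)`_c <= x j)%R) j0 Hnj0.
 apply: leq_trans (_ : (count (fun j => ((zs x)`_c <= x j)%R) (enum 'I_n)).+1 <= _)%N.
  lia.
rewrite E; apply: sub_count => j /= /orP [/HA //|/eqP ->]; exact: Hw0.
Qed.


Lemma twist_upper u v i : (u <= i)%N -> (i <= v)%N -> (v < n)%N ->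
  rightbar G x (zs x)`_v -> gapok u v ->
  (zs wstep)`_i <= rho * (zs x)`_(maxn i.-1 u) + (1 - rho) * (zs x)`_v.
Proof.
move=> Hui Hiv Hvn Hrb Hgap.
set c := maxn i.-1 u.
have Hcv : (c <= v)%N by rewrite /c geq_max; apply/andP; split; lia.
have Huc : (u <= c)%N by rewrite /c leq_max leqnn orbT.
have Hcn : (c < n)%N by lia.
set U := _ + _.
have HA : forall j, x j <= (zs x)`_c -> wstep j <= U.
  move=> j Hj; have Hv : x j <= (zs x)`_v by apply: le_trans Hj (zs_mono x Hcv Hvn).
  have Hnb : forall l, G j l -> x l <= (zs x)`_v.
    by move=> l Hl; apply: (Hrb l j) => //; rewrite Gsym_ok.
  have := avg_upper Hnb (Grefl j) Hv.
  have : rho * x j <= rho * (zs x)`_c by apply: ler_wpM2l => //; exact: ltW.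
  rewrite /U; lra.
have Hbase : (c < count (fun j => (x j <= (zs x)`_c)%R) (enum 'I_n))%N.
  rewrite -(zs_count x (fun r => r <= (zs x)`_c)).
  have := @srt_cnt_le _ (zs x) c (zs_sorted x); rewrite zs_size; apply.
  exact: Hcn.
apply: srt_le; [exact: zs_sorted | by rewrite zs_size; lia | ].
rewrite zs_count.
have Hsub : (count (fun j => (x j <= (zs x)`_c)%R) (enum 'I_n) <=
             count (fun j => (wstep j <= U)%R) (enum 'I_n))%N.
  by apply: sub_count => j /= /HA.
case: (eqVneq i u) => [Eiu|Hiu'].
  have Ec : c = u by rewrite /c Eiu; apply/maxn_idPr; exact: leq_pred.
  by apply: leq_trans Hsub; rewrite Eiu -Ec.
have Hiu2 : (u < i)%N by rewrite ltn_neqAle eq_sym Hiu' Hui.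
have Ec : c = i.-1 by rewrite /c; apply/maxn_idPl; lia.
have Ei : i = c.+1 by lia.
have Hcv2 : (c < v)%N by lia.
case: (eqVneq (zs x)`_c (zs x)`_c.+1) => [Ezz|Hzz].
  have H1 : (i < count (fun j => (x j <= (zs x)`_i)%R) (enum 'I_n))%N.
    rewrite -(zs_count x (fun r => r <= (zs x)`_i)).
    have := @srt_cnt_le _ (zs x) i (zs_sorted x); rewrite zs_size; apply.
    lia.
  apply: leq_trans Hsub; apply: leq_trans H1 _; apply: sub_count => j /=.
  by rewrite Ei Ezz.
have Hlt : (zs x)`_c < (zs x)`_c.+1.
  by rewrite lt_neqAle Hzz zs_mono //; lia.
have [j0 [k0 [Hjk Hj0 Hk0]]] := Hgap c Huc Hcv2 Hlt.
have Hj0v : x j0 <= (zs x)`_v by apply: le_trans Hj0 (zs_mono x Hcv Hvn).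
have Hkj : G k0 j0 by rewrite Gsym_ok.
have Hk0v : x k0 <= (zs x)`_v by apply: (Hrb k0 j0).
have Hnb : forall l, G k0 l -> x l <= (zs x)`_v.
  by move=> l Hl; apply: (Hrb l k0) => //; rewrite Gsym_ok.
have Hw0 : wstep k0 <= U.
  have := avg_upper Hnb Hkj Hj0v.
  have : rho * x j0 <= rho * (zs x)`_c by apply: ler_wpM2l => //; exact: ltW.
  rewrite /U; lra.
have Hnk0 : ~~ (x k0 <= (zs x)`_c).
  by rewrite -ltNge; exact: lt_le_trans Hlt Hk0.
have E := @count_add1 (fun j => (x j <= (zs x)`_c)%R) k0 Hnk0.
apply: leq_trans (_ : (count (fun j => (x j <= (zs x)`_c)%R) (enum 'I_n)).+1 <= _)%N.
  lia.
rewrite E; apply: sub_count => j /= /orP [/HA //|/eqP ->]; exact: Hw0.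
Qed.

End Step.

Section Fin.
Variables (R : realType) (n : nat) (G : rel 'I_n) (x : 'I_n -> R).
Hypothesis Gsym : forall i j, G i j = G j i.

Lemma Bt_props p : p \in Bt G x ->
  [/\ (p.1 <= p.2)%N, (p.2 < n)%N, leftbar G x (zs x)`_p.1,
      rightbar G x (zs x)`_p.2 &
      forall i, (p.1 <= i)%N -> (i < p.2)%N -> (zs x)`_i < (zs x)`_i.+1 ->
        exists j k, [/\ G j k, x j <= (zs x)`_i & (zs x)`_i.+1 <= x k]].
Proof.
move=> Hp; case: (Bt_cases Hp) => [[a [b [B1 ->]]]|[E [Hn Hni]]].
  have [H1 H2 Ea Eb Hch] := bpairP Gsym B1.
  split => //; first by rewrite Ea; exact: blk_leftbar B1.
    by rewrite Eb; exact: (blk_rightbar Gsym B1).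
  move=> i Hui Hiv Hlt.
  have Hin : (i.+1 < n)%N := leq_ltn_trans Hiv H2.
  pose q := ((zs x)`_i + (zs x)`_i.+1) / 2.
  have Hq1 : (zs x)`_i < q by rewrite /q; lra.
  have Hq2 : q < (zs x)`_i.+1 by rewrite /q; lra.
  have Haq : a <= q.
    rewrite -Ea; apply: le_trans (ltW Hq1); apply: (zs_mono x Hui); lia.
  have Hqb : q <= b.
    rewrite -Eb; apply: le_trans (ltW Hq2) _; exact: (zs_mono x Hiv H2).
  have [j [k [Hjk HG Hj Hk]]] := edge_or Gsym (blk_cov B1 (introT andP (conj Haq Hqb))).
  exists j, k; split => //.
    by have [Hb _] := zs_between (zs_memx x j) Hin; apply: Hb; exact: le_lt_trans Hj Hq2.
  by have [_ Hb] := zs_between (zs_memx x k) Hin; apply: Hb; exact: lt_le_trans Hq1 Hk.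
split; rewrite -?E //.
- exact: pt_leftbar Hni.
- exact: pt_rightbar Hni.
- by move=> i H1 H2; lia.
Qed.

Lemma bpair_Bt a b : is_block x G a b -> bpair x a b \in Bt G x.
Proof.
move=> B1; have [H1 H2 _ _ _] := bpairP Gsym B1.
rewrite Bt_mem H2 (leq_ltn_trans H1 H2) andbT /QB.
have HB : isBP G x (bpair x a b) by exists a, b.
by rewrite (asboolT HB).
Qed.

Lemma Bt_twist (P : 'M[R]_n) rho : avg_step_ok rho G P -> 0 < rho ->
  twist_step rho (Bt G x) (zs x) (zs (wstep x P)).
Proof.
move=> Hok Hrho p Hp i /andP [Hui Hiv].
have [H1 H2 Hlb Hrb Hgap] := Bt_props Hp.
split.
  exact: (twist_lower Hok Hrho Hui Hiv H2 Hlb Hgap).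
exact: (twist_upper Hok Hrho Hui Hiv H2 Hrb Hgap).
Qed.


Local Open Scope ereal_scope.
Local Open Scope classical_set_scope.

Lemma Bt_energy (s : R) : s != 0%R ->
  \esum_(q in [set q : R * R | is_block x G q.1 q.2]) (((q.2 - q.1) `^ s)%:E) =
  ((\sum_(p <- Bt G x) ((zs x)`_p.2 - (zs x)`_p.1) `^ s)%R)%:E.
Proof.
move=> Hs.
pose L := [seq p <- Bt G x | `[< isBP G x p >]].
pose g (p : nat * nat) := ((zs x)`_p.1, (zs x)`_p.2).
have HL : forall p, p \in L -> exists a b, [/\ is_block x G a b, p = bpair x a b & g p = (a, b)].
  move=> p; rewrite mem_filter => /andP [/asboolP [a [b [B1 E]]] _].
  exists a, b; split => //.
  by have [_ _ Ea Eb _] := bpairP Gsym B1; rewrite /g E Ea Eb.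
have Eset : [set q : R * R | is_block x G q.1 q.2] = g @` [set` L].
  apply/seteqP; split => [[a b] /= B1|q [p Hp <-]].
    exists (bpair x a b).
      rewrite /= mem_filter; apply/andP; split.
        by apply/asboolP; exists a, b.
      have [H1 H2 _ _ _] := bpairP Gsym B1.
      rewrite Bt_mem H2 (leq_ltn_trans H1 H2) andbT /QB.
      have HB : isBP G x (bpair x a b) by exists a, b.
      by rewrite (asboolT HB).
    by have [_ _ Ea Eb _] := bpairP Gsym B1; rewrite /g Ea Eb.
  by have [a [b [B1 _ ->]]] := HL p Hp.
have Hinj : set_inj [set` L] g.
  move=> p q /= Hp Hq Eg; rewrite !inE /= in Hp Hq.
  have [a [b [B1 Ep Ga]]] := HL p Hp.
  have [a' [b' [B2 Eq Ga']]] := HL q Hq.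
  by move: Eg; rewrite Ga Ga' => -[E1 E2]; rewrite Ep Eq E1 E2.
rewrite Eset esum_image // esum_fset; last first.
- by move=> p _; rewrite lee_fin powR_ge0.
- exact: finite_seq.
have HLu : uniq L by apply: filter_uniq; exact: Bt_uniq.
rewrite -fsbig_seq // sumEFin; congr (_%:E).
rewrite big_filter big_mkcond /=; apply: eq_big_seq => p Hp.
case: (boolP `[< isBP G x p >]) => // Hn.
case: (Bt_cases Hp) => [[a [b [B1 E]]]|[E _]].
  by move: Hn; rewrite asboolT //; exists a, b.
by rewrite E subrr powR0.
Qed.

End Fin.

Unset Implicit Arguments.
Set Strict Implicit.

Theorem lemma2 (R : realType) (n m : nat) (rho : R)
  (G : nat -> rel 'I_n) (P : nat -> 'M[R]_n) (x : nat -> 'I_n -> R) :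
  0 < rho <= 1 / 2 ->
  (forall t, avg_step_ok rho (G t) (P t)) ->
  (forall t i, x t.+1 i = \sum_(j < n) P t i j * x t j) ->
  (forall t, (n_comp (G t) predT <= m)%N) ->
  let z := fun t => sorted_pos (x t) in
  exists B : nat -> seq (nat * nat),
    [/\ twist_system n m rho z B,
        (* each block of G_t yields, as a twist block, the index interval of
           the (sorted) agents it spans *)
        (forall t a b, is_block (x t) (G t) a b ->
           exists2 p, p \in B t &
             forall k, (k < n)%N -> (p.1 <= k <= p.2)%N = (a <= (z t)`_k <= b)),
        (* and every twist block is such an interval, or a singleton *)
        (forall t p, p \in B t ->
           p.1 = p.2 \/
           exists a b, is_block (x t) (G t) a b /\
             forall k, (k < n)%N -> (p.1 <= k <= p.2)%N = (a <= (z t)`_k <= b)) &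
        (forall s, 0 < s <= 1 -> twist_energy s z B = avg_energy s x G)].
Proof.
move=> /andP [Hrho _] Hok Hdyn Hcomp z.
have Gsym : forall t i j, G t i j = G t j i.
  by move=> t; case: (Hok t) => [[_ H] _ _ _ _].
exists (fun t => Bt (G t) (x t)); split.
- move=> t; split.
  + exact: zs_size.
  + exact: zs_sorted.
  + split.
    * apply: leq_trans (Hcomp t); apply: Bt_size; [exact: Gsym | move=> i j; exact: Gsym].
    * by move=> p Hp; have [H1 H2] := Bt_bounds (Gsym t) Hp; rewrite H1 H2.
    * by move=> k Hk; exact: (Bt_count (x t) (Gsym t) Hk).
  + rewrite /z; have -> : x t.+1 = wstep (x t) (P t) by apply: boolp.funext => i; rewrite Hdyn.
    exact: (Bt_twist (Gsym t) (Hok t) Hrho).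
- move=> t a b B1; exists (bpair (x t) a b); first exact: (bpair_Bt (Gsym t) B1).
  by have [_ _ _ _ Hch] := bpairP (Gsym t) B1.
- move=> t p Hp; case: (Bt_cases Hp) => [[a [b [B1 E]]]|[E _]]; last by left.
  right; exists a, b; split => //; rewrite E.
  by have [_ _ _ _ Hch] := bpairP (Gsym t) B1.
- move=> s /andP [Hs _]; rewrite /twist_energy /avg_energy.
  apply: eq_eseriesr => t _; rewrite (@Bt_energy _ _ (G t) (x t) (Gsym t)) //.
  by rewrite gt_eqF.
Qed.
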